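(* Let $E$ be a real Banach space and let $T:E\to E$ be a linear operator preserving (Birkhoff–James) orthogonality, i.e. for all $x,y\in E$, $x\perp y$ implies $Tx\perp Ty$. Then there exist a constant $k\in\mathbb{R}$ and a linear isometry $U:E\to E$ (i.e. $\|Ux\|=\|x\|$ for all $x\in E$) such that $T=kU$. Equivalently, there is a constant $c\ge 0$ with $\|Tx\|=c\|x\|$ for all $x\in E$.
   Context: For $x,y$ in a real normed space $E$, $x$ is said to be orthogonal to $y$, written $x\perp y$, if $\|x+\alpha y\|\ge\|x\|$ for every $\alpha\in\mathbb{R}$. *)

(* Defs.v *)
From HB Require Import structures.
From mathcomp Require Import all_boot all_order all_algebra.
From mathcomp Require Import all_classical all_reals all_analysis.
Set Implicit Arguments. Unset Strict Implicit. Unset Printing Implicit Defensive.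
Import Order.TTheory GRing.Theory Num.Theory.
Local Open Scope ring_scope.

Definition bj_orth (R : realType) (E : normedModType R) (x y : E) : Prop :=
  forall a : R, `|x| <= `|x + a *: y|.

(* Main.v *)
Require Import Defs.
From HB Require Import structures.
From mathcomp Require Import all_boot all_order all_algebra.
From mathcomp Require Import all_classical all_reals all_analysis.
From mathcomp Require Import ring lra.
Set Implicit Arguments. Unset Strict Implicit. Unset Printing Implicit Defensive.
Import Order.TTheory GRing.Theory Num.Theory.
Local Open Scope ring_scope.

Lemma comb (R : realType) (E : normedModType R) (x v : E) (a b c d : R) :
  a *: x + b *: v + (c *: x + d *: v) = (a + c) *: x + (b + d) *: v.
Proof. by rewrite !scalerDl addrACA. Qed.

Definition fl (R : realType) (E : normedModType R) (x v : E) (t : R) : R :=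
  `|x + t *: v|.

Lemma fl_ge0 (R : realType) (E : normedModType R) (x v : E) t : 0 <= fl x v t.
Proof. exact: normr_ge0. Qed.

Lemma fl_convex (R : realType) (E : normedModType R) (x v : E) t t0 t' :
  t < t0 -> t0 < t' ->
  fl x v t0 * (t' - t) <= fl x v t * (t' - t0) + fl x v t' * (t0 - t).
Proof.
move=> h1 h2.
have e : (t' - t) *: (x + t0 *: v) =
   (t' - t0) *: (x + t *: v) + (t0 - t) *: (x + t' *: v).
  rewrite !scalerDr !scalerA comb; congr (_ *: _ + _ *: _); ring.
have := ler_normD ((t' - t0) *: (x + t *: v)) ((t0 - t) *: (x + t' *: v)).
rewrite -e !normrZ !gtr0_norm ?subr_gt0 //; try lra.
rewrite /fl; lra.
Qed.

Lemma fl_lip (R : realType) (E : normedModType R) (x v : E) t t' :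
  fl x v t' - fl x v t <= `|t' - t| * `|v|.
Proof.
have e : x + t' *: v = (x + t *: v) + (t' - t) *: v.
  by rewrite -addrA -scalerDl; congr (_ + _ *: _); ring.
have := ler_normD (x + t *: v) ((t' - t) *: v).
rewrite -e normrZ /fl; lra.
Qed.
Local Open Scope classical_set_scope.
Definition sgr (R : realType) (E : normedModType R) (x v : E) (t0 : R) : R :=
  sup [set y : R | exists2 t, t < t0 & y = (fl x v t0 - fl x v t) / (t0 - t)].
Local Close Scope classical_set_scope.

Lemma sgr_sub (R : realType) (E : normedModType R) (x v : E) t0 t :
  fl x v t0 + sgr x v t0 * (t - t0) <= fl x v t.
Proof.
set S := [set y : R | exists2 t, t < t0 & y = (fl x v t0 - fl x v t) / (t0 - t)]%classic.
have ub : forall t', t0 < t' -> ubound S ((fl x v t' - fl x v t0) / (t' - t0)).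
  move=> t' ht' y [t1 ht1 ->].
  have := fl_convex x v ht1 ht'.
  rewrite ler_pdivrMr ?subr_gt0 // mulrAC ler_pdivlMr ?subr_gt0 //.
  nra.
have ne : (S !=set0)%classic by exists ((fl x v t0 - fl x v (t0 - 1)) / (t0 - (t0 - 1))); exists (t0 - 1) => //; lra.
have [ht|ht|->] := ltgtP t t0; last by lra.
- have : (fl x v t0 - fl x v t) / (t0 - t) <= sgr x v t0.
    apply: (sup_upper_bound (conj ne _)); last by exists t.
    by exists ((fl x v (t0 + 1) - fl x v t0) / (t0 + 1 - t0)); apply: ub; lra.
  rewrite ler_pdivrMr ?subr_gt0 //; nra.
- have : sgr x v t0 <= (fl x v t - fl x v t0) / (t - t0).
    by apply: ge_sup => //; apply: ub.
  rewrite ler_pdivlMr ?subr_gt0 //; nra.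
Qed.

Lemma ell_le (R : realType) (E : normedModType R) (x v : E) t0 u w :
  u * (fl x v t0 - sgr x v t0 * t0) + sgr x v t0 * w <= `|u *: x + w *: v|.
Proof.
set s := sgr x v t0.
have pos : forall u' w', 0 < u' ->
    u' * (fl x v t0 - s * t0) + s * w' <= `|u' *: x + w' *: v|.
  move=> u' w' hu.
  have := sgr_sub x v t0 (w' / u').
  have e : u' *: x + w' *: v = u' *: (x + (w' / u') *: v).
    by rewrite scalerDr scalerA mulrC divfK // gt_eqF.
  rewrite e normrZ gtr0_norm // -/s /fl.
  have ee : u' * (w' / u') = w' by rewrite mulrC divfK // gt_eqF.
  set q := w' / u' in ee *; move=> h.
  have h2 := h; rewrite -(ler_pM2l hu) in h2.
  have ee2 : s * (u' * q) = s * w' by rewrite ee.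
  nra.
have hl : 0 < u + (`|u| + 1) by have := ler_norm (- u); rewrite normrN; lra.
have := pos _ (w + (`|u| + 1) * t0) hl.
have e : (u + (`|u| + 1)) *: x + (w + (`|u| + 1) * t0) *: v =
   (u *: x + w *: v) + (`|u| + 1) *: (x + t0 *: v).
  rewrite scalerDr scalerA comb //.
have := ler_normD (u *: x + w *: v) ((`|u| + 1) *: (x + t0 *: v)).
rewrite -e normrZ (@gtr0_norm _ (`|u| + 1)); last by have := normr_ge0 u; lra.
rewrite /fl -/s. nra.
Qed.

Definition cb (R : realType) (E : normedModType R) (x v : E) (a b : R) : E :=
  a *: x + b *: v.
Lemma cbD (R : realType) (E : normedModType R) (x v : E) a b c d :
  cb x v a b + cb x v c d = cb x v (a + c) (b + d).
Proof. exact: comb. Qed.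
Lemma cbZ (R : realType) (E : normedModType R) (x v : E) k a b :
  k *: cb x v a b = cb x v (k * a) (k * b).
Proof. by rewrite /cb scalerDr !scalerA. Qed.
Lemma cbB (R : realType) (E : normedModType R) (x v : E) a b c d :
  cb x v a b - cb x v c d = cb x v (a - c) (b - d).
Proof. by rewrite /cb opprD -!scaleNr comb. Qed.
Lemma cbE (R : realType) (E : normedModType R) (x v : E) a b a' b' :
  a = a' -> b = b' -> cb x v a b = cb x v a' b'.
Proof. by move=> -> ->. Qed.

Lemma bj_line (R : realType) (E : normedModType R) (x v : E) t0 :
  bj_orth (x + t0 *: v) (fl x v t0 *: v - sgr x v t0 *: (x + t0 *: v)).
Proof.
move=> a; set s := sgr x v t0; set f := fl x v t0.
have e1 : x + t0 *: v = cb x v 1 t0 by rewrite /cb scale1r.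
have e2 : f *: v = cb x v 0 f by rewrite /cb scale0r add0r.
rewrite e1 e2 cbZ cbB cbZ cbD.
have -> : `|cb x v 1 t0| = f by rewrite -e1.
apply: le_trans (ell_le x v t0 _ _).
rewrite -/s -/f le_eqVlt; apply/orP; left; apply/eqP; ring.
Qed.

Lemma keyT (R : realType) (E : normedModType R) (T : {linear E -> E})
  (HT : forall x y : E, bj_orth x y -> bj_orth (T x) (T y)) (x v : E) t0 t :
  fl (T x) (T v) t0 * (fl x v t0 + sgr x v t0 * (t - t0))
    <= fl (T x) (T v) t * fl x v t0.
Proof.
set s := sgr x v t0; set f := fl x v t0; set L := f + s * (t - t0).
have f0 : 0 <= f by exact: fl_ge0.
have g0 : 0 <= fl (T x) (T v) t0 by exact: fl_ge0.
have g1 : 0 <= fl (T x) (T v) t by exact: fl_ge0.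
have [hL|hL] := lerP L 0; first by nra.
have Tp : T (x + t0 *: v) = T x + t0 *: T v by rewrite linearD linearZ.
have Tw : T (f *: v - s *: (x + t0 *: v)) = f *: T v - s *: (T x + t0 *: T v).
  by rewrite linearB !linearZ Tp.
have h0 := HT _ _ (bj_line x v t0); rewrite -/s -/f Tw Tp in h0.
have h := h0 ((t - t0) / L).
have e1 : T x + t0 *: T v = cb (T x) (T v) 1 t0 by rewrite /cb scale1r.
have e2 : f *: T v = cb (T x) (T v) 0 f by rewrite /cb scale0r add0r.
rewrite e1 e2 cbZ cbB cbZ cbD in h.
have Ln : L != 0 by rewrite gt_eqF.
have c1 : 1 + (t - t0) / L * (0 - s * 1) = (f / L) * 1.
  by rewrite /L in Ln *; field.
have c2 : t0 + (t - t0) / L * (f - s * t0) = (f / L) * t.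
  by rewrite /L in Ln *; field.
rewrite (cbE _ _ c1 c2) in h.
rewrite -cbZ normrZ ger0_norm in h; last by apply: divr_ge0 => //; exact: ltW.
rewrite -e1 /cb scale1r in h.
rewrite /fl; move: h; rewrite /fl.
set A := `|T x + t0 *: T v|; set B := `|T x + t *: T v|.
rewrite mulrAC ler_pdivlMr //; nra.
Qed.

Lemma step_alg (R : realType) (m F1a F1b F2a F2b d ga gb : R) :
  0 < m -> m <= F1b -> 0 < F1a -> 0 <= d -> 0 <= ga ->
  F2a = ga * F1a -> F2b = gb * F1b -> F2a * (F1b - d) <= F2b * F1a ->
  ga * (1 - d / m) <= gb.
Proof.
move=> m0 mF a0 d0 g0 -> -> h.
have h1 : ga * (F1b - d) <= gb * F1b.
  by rewrite -(ler_pM2r a0) mulrAC.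
set del := d / m.
have dd : d = del * m by rewrite /del divfK // gt_eqF.
have del0 : 0 <= del by apply: divr_ge0 => //; exact: ltW.
have h2 : ga * (1 - del) * F1b <= gb * F1b.
  apply: le_trans h1; rewrite dd.
  have hm : 0 <= F1b - m by rewrite subr_ge0.
  have := mulr_ge0 (mulr_ge0 g0 del0) hm; nra.
by rewrite ler_pM2r in h2 => //; lra.
Qed.

Lemma ind_alg (R : realType) (g0 ga gb A A' del : R) :
  0 <= g0 -> 0 <= gb -> 0 <= A -> 0 <= del -> A + del <= A' ->
  g0 * (1 - A) <= ga -> ga * (1 - del) <= gb -> g0 * (1 - A') <= gb.
Proof.
move=> h0 h1 h2 h3 h4 h5 h6.
have [hd|hd] := lerP del 1; last by nra.
have : g0 * (1 - A) * (1 - del) <= ga * (1 - del) by apply: ler_wpM2r; lra.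
have := mulr_ge0 (mulr_ge0 h0 h2) h3.
have : 0 <= g0 * (A' - A - del) by apply: mulr_ge0 => //; lra.
nra.
Qed.

Lemma chain (R : realType) (f1 f2 sg : R -> R) (m K : R) :
  0 < m ->
  (forall t0 t, f1 t0 + sg t0 * (t - t0) <= f1 t) ->
  (forall t0 t, f2 t0 * (f1 t0 + sg t0 * (t - t0)) <= f2 t * f1 t0) ->
  (forall t, 0 <= t <= 1 -> m <= f1 t) ->
  (forall t, 0 <= f2 t) ->
  sg 1 - sg 0 <= K ->
  f2 0 / f1 0 <= f2 1 / f1 1.
Proof.
move=> m0 H1 H2 H3 H4 HK.
have mono : forall a b, a <= b -> sg a <= sg b.
  move=> a b ab; have := H1 a b; have := H1 b a.
  have [e|lt] := eqVneq a b; first by rewrite e.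
  have ab' : a < b by rewrite lt_neqAle lt ab.
  nra.
pose g t := f2 t / f1 t.
have f1p : forall t, 0 <= t <= 1 -> 0 < f1 t.
  by move=> t ht; apply: lt_le_trans m0 (H3 t ht).
have g0 : forall t, 0 <= t <= 1 -> 0 <= g t.
  by move=> t ht; apply: divr_ge0 => //; exact: ltW (f1p t ht).
have gE : forall t, 0 <= t <= 1 -> f2 t = g t * f1 t.
  by move=> t ht; rewrite /g divfK // gt_eqF // f1p.
have P : forall n : nat, (0 < n)%N -> forall k : nat, (k <= n)%N ->
    g 0 * (1 - (sg (k%:R / n%:R) - sg 0) / (n%:R * m)) <= g (k%:R / n%:R).
  move=> n n0; elim=> [|k IH] kn.
    by rewrite mul0r subrr mul0r subr0 mulr1.
  have kn' : (k <= n)%N by apply: ltnW.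
  move: {IH}(IH kn') => IH.
  have n0' : 0 < n%:R :> R by rewrite ltr0n.
  have tk : 0 <= (k%:R / n%:R : R) <= 1.
    apply/andP; split; first by apply: divr_ge0.
    by rewrite ler_pdivrMr // mul1r ler_nat.
  have tk1 : 0 <= (k.+1%:R / n%:R : R) <= 1.
    apply/andP; split; first by apply: divr_ge0.
    by rewrite ler_pdivrMr // mul1r ler_nat.
  set a := k%:R / n%:R in IH tk *; set b := k.+1%:R / n%:R in tk1 *.
  have ba : b - a = 1 / n%:R by rewrite /a /b -mulrBl -addn1 natrD addrAC subrr add0r.
  set d := f1 b - (f1 a + sg a * (b - a)).
  have d0 : 0 <= d by rewrite /d subr_ge0; exact: H1.
  have dle : d <= (sg b - sg a) * (b - a).
    have := H1 b a; rewrite /d; nra.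
  have st := step_alg m0 (H3 b tk1) (f1p a tk) d0 (g0 a tk) (gE a tk) (gE b tk1).
  have st' : g a * (1 - d / m) <= g b.
    apply: st; rewrite /d opprB addrC subrK; exact: H2.
  apply: (ind_alg _ _ _ _ _ IH st').
  - by apply: g0; rewrite lexx ler01.
  - exact: g0 b tk1.
  - apply: divr_ge0; last by apply: mulr_ge0; [exact: ltW | exact: ltW].
    rewrite subr_ge0; apply: mono; by case/andP: tk.
  - by apply: divr_ge0 => //; exact: ltW.
  - have im : 0 <= m^-1 by rewrite invr_ge0 ltW.
    rewrite ba in dle.
    have h := ler_wpM2r im dle.
    have nn : n%:R != 0 :> R by rewrite gt_eqF.
    have mn : m != 0 by rewrite gt_eqF.
    have e : (sg b - sg 0) / (n%:R * m) =
      (sg a - sg 0) / (n%:R * m) + (sg b - sg a) * (1 / n%:R) * m^-1.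
      by field; rewrite mn nn.
    rewrite e; lra.
have hmono : 0 <= sg 1 - sg 0 by rewrite subr_ge0 mono // ler01.
rewrite leNgt; apply/negP => hlt.
set D := g 0 - g 1.
have D0 : 0 < D by rewrite /D subr_gt0.
have g00 : 0 <= g 0 by apply: g0; rewrite lexx ler01.
set X := K * g 0 / (m * D).
set N := (Num.truncn X).+1.
have NX : X < N%:R by exact: truncnS_gt.
have N0 : (0 < N)%N by [].
have N0' : 0 < N%:R :> R by rewrite ltr0n.
have := P N N0 N (leqnn N).
rewrite divff ?gt_eqF //.
set u := (sg 1 - sg 0) / (N%:R * m) => Pn.
have ue : u * (N%:R * m) = sg 1 - sg 0.
  by rewrite /u divfK // mulf_neq0 // gt_eqF.
have Xe : X * (m * D) = K * g 0.
  by rewrite /X divfK // mulf_neq0 // gt_eqF.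
have h1 : D <= g 0 * u by rewrite /D; nra.
have Nm0 : 0 < N%:R * m by apply: mulr_gt0.
have h2 : g 0 * u * (N%:R * m) <= K * g 0.
  by rewrite -mulrA ue; nra.
have h3 : X * (m * D) < N%:R * (m * D).
  by rewrite ltr_pM2r // mulr_gt0.
nra.
Qed.

Lemma unit_le (R : realType) (E : normedModType R) (T : {linear E -> E})
  (HT : forall x y : E, bj_orth x y -> bj_orth (T x) (T y)) (x y : E) :
  `|x| = 1 -> `|y| = 1 -> `|y - x| < 2 -> `|T x| <= `|T y|.
Proof.
move=> hx hy hxy; set v := y - x.
have nv := normr_ge0 v.
have := @chain R (fl x v) (fl (T x) (T v)) (sgr x v) (1 - `|v| / 2) (2 * `|v|).
have f10 : fl x v 0 = 1 by rewrite /fl scale0r addr0.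
have f11 : fl x v 1 = 1 by rewrite /fl scale1r /v addrC subrK.
have f20 : fl (T x) (T v) 0 = `|T x| by rewrite /fl scale0r addr0.
have f21 : fl (T x) (T v) 1 = `|T y|.
  by rewrite /fl scale1r -linearD /v addrC subrK.
rewrite f10 f11 f20 f21 !divr1; apply.
- lra.
- exact: sgr_sub.
- exact: keyT.
- move=> t /andP[t0 t1].
  have e1 : x = (x + t *: v) + (- t) *: v by rewrite scaleNr addrK.
  have e2 : y = (x + t *: v) + (1 - t) *: v.
    by rewrite -addrA -scalerDl (addrC t) subrK scale1r /v addrC subrK.
  have h1 := ler_normD (x + t *: v) ((- t) *: v).
  have h2 := ler_normD (x + t *: v) ((1 - t) *: v).
  rewrite -e1 normrZ normrN ger0_norm // hx in h1.
  rewrite -e2 normrZ ger0_norm ?subr_ge0 // hy in h2.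
  rewrite /fl. nra.
- move=> t; exact: fl_ge0.
- have a1 := sgr_sub x v 1 2.
  have a2 := sgr_sub x v 0 (-1).
  have l1 := fl_lip x v 1 2.
  have l2 := fl_lip x v 0 (-1).
  have e1 : `|(2 : R) - 1| = 1 by rewrite (_ : (2 : R) - 1 = 1) ?normr1 //; ring.
  have e2 : `|(-1 : R) - 0| = 1 by rewrite subr0 normrN normr1.
  rewrite e1 e2 !mul1r in l1 l2.
  have e3 : (2 : R) - 1 = 1 by ring.
  have e4 : (-1 : R) - 0 = -1 by ring.
  rewrite e3 mulr1 in a1; rewrite e4 mulrN1 in a2.
  move: a1 a2 l1 l2; set A := sgr x v 1; set B := sgr x v 0.
  set P2 := fl x v 2; set P1 := fl x v 1; set P0 := fl x v 0; set Pm := fl x v (-1).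
  lra.
Qed.

Lemma half (R : realType) : (2^-1 + 2^-1 : R) = 1.
Proof. by field. Qed.

Lemma unit_eq (R : realType) (E : normedModType R) (T : {linear E -> E})
  (HT : forall x y : E, bj_orth x y -> bj_orth (T x) (T y)) (x y : E) :
  `|x| = 1 -> `|y| = 1 -> `|T x| = `|T y|.
Proof.
have near : forall a b : E, `|a| = 1 -> `|b| = 1 -> `|b - a| < 2 ->
    `|T a| = `|T b|.
  move=> a b ha hb hab; apply/eqP; rewrite eq_le; apply/andP; split.
    exact: unit_le.
  by apply: unit_le => //; rewrite -normrN opprB.
move=> hx hy.
have [h1|h1] := ltP `|y - x| 2; first exact: near.
have [h2|h2] := ltP `|- y - x| 2.
  by rewrite -[`|T y|]normrN -linearN; apply: near => //; rewrite normrN.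
have tri1 := ler_normB y x.
rewrite hx hy in tri1.
have e1 : - y - x = - (x + y) by rewrite opprD addrC.
rewrite e1 normrN in h2.
set z := 2^-1 *: (x + y).
have hz : `|z| = 1.
  have := ler_normD x y; rewrite hx hy => h3.
  rewrite /z normrZ ger0_norm ?invr_ge0 //.
  have -> : `|x + y| = 2 by apply/eqP; rewrite eq_le h3 h2.
  by rewrite mulVf.
have hx2 : forall w : E, w = 2^-1 *: w + 2^-1 *: w.
  by move=> w; rewrite -scalerDl half scale1r.
have ezx : z - x = 2^-1 *: (y - x).
  rewrite /z scalerDr scalerBr addrAC addrC; congr (_ + _).
  by rewrite {2}(hx2 x) opprD addrA subrr add0r.
have eyz : y - z = 2^-1 *: (y - x).
  rewrite /z scalerDr scalerBr opprD addrA addrAC; congr (_ + _).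
  by rewrite {1}(hx2 y) addrK.
have hh : `|2^-1 *: (y - x)| < 2.
  rewrite normrZ ger0_norm ?invr_ge0 //.
  have : `|y - x| <= 2 by lra.
  move=> h; rewrite ltr_pdivrMl //; lra.
rewrite (near x z) //; last by rewrite ezx.
by apply: near => //; rewrite eyz.
Qed.

Lemma ratio (R : realType) (E : normedModType R) (T : {linear E -> E})
  (HT : forall x y : E, bj_orth x y -> bj_orth (T x) (T y)) (x y : E) :
  `|T x| * `|y| = `|T y| * `|x|.
Proof.
have [->|nx] := eqVneq x 0; first by rewrite linear0 !normr0 mul0r mulr0.
have [->|ny] := eqVneq y 0; first by rewrite linear0 !normr0 mul0r mulr0.
have nx' : `|x| != 0 by rewrite normr_eq0.
have ny' : `|y| != 0 by rewrite normr_eq0.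
have u1 : forall w : E, `|w| != 0 -> `|(`|w|^-1 *: w)| = 1.
  by move=> w hw; rewrite normrZ ger0_norm ?invr_ge0 // mulVf.
have := unit_eq HT (u1 x nx') (u1 y ny').
rewrite !linearZ /= !normrZ !ger0_norm ?invr_ge0 // => h.
rewrite -[`|T x|](mulVKf nx') h; by field.
Qed.

Theorem mainTheorem1 (R : realType) (E : completeNormedModType R)
    (T : {linear E -> E}) :
  (forall x y : E, bj_orth x y -> bj_orth (T x) (T y)) ->
  exists (k : R) (U : {linear E -> E}),
    (forall x : E, `|U x| = `|x|) /\ (forall x : E, T x = k *: U x).
Proof.
move=> HT.
have [H0|Hn] := pselect (forall x, T x = 0).
  by exists 0, idfun; split => // x; rewrite H0 scale0r.
have [x0 hx0] := (existsNP _).2 Hn.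
have nx0 : x0 != 0 by apply/eqP => e; apply: hx0; rewrite e linear0.
have nT : `|T x0| != 0 by rewrite normr_eq0; apply/eqP.
have nn : `|x0| != 0 by rewrite normr_eq0.
set c := `|T x0| / `|x0|.
have c0 : c != 0 by rewrite /c mulf_neq0 // invr_eq0.
have cp : 0 <= c by rewrite /c divr_ge0.
have hc : forall x, `|T x| = c * `|x|.
  move=> x; have := ratio HT x x0 => h.
  by rewrite /c mulrAC -h mulfK.
exists c, (c^-1 \*: T); split => x /=.
  by rewrite normrZ ger0_norm ?invr_ge0 // hc mulKf.
by rewrite scalerA mulfV // scale1r.
Qed.
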